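(* In the setting described in the context, let $i\in[m]$, $S\subseteq[k]$ and $t\in[k]\setminus S$. Then $$\big\|\mathsf{P}_{Y_i}\mathsf{P}_{\Omega_{-i}Z|W,Y_i^S=\perp^S,Y_i^{\overline{S}}}-\mathsf{P}_{Y_i}\mathsf{P}_{\Omega_{-i}Z|W,Y_i^{S\cup\{t\}}=\perp^{S\cup\{t\}},Y_i^{\overline{S}\setminus\{t\}}}\big\|\le 2\alpha^{-(|S|+1)}\big\|\mathsf{P}_{Y_i}\mathsf{P}_{Z\Omega_{-i}|W,Y_i}-\mathsf{P}_{Y_i}\mathsf{P}_{Z\Omega_{-i}|W,Y_i^{-t}}\big\|.$$
   Context: Let $G=(\mathcal{X},\mathcal{A},\mu,V)$ be a $k$-player game: $\mathcal{X}=\mathcal{X}^1\times\cdots\times\mathcal{X}^k$, $\mathcal{A}=\mathcal{A}^1\times\cdots\times\mathcal{A}^k$ finite, $\mu$ a distribution on $\mathcal{X}$, $V:\mathcal{X}\times\mathcal{A}\to\{0,1\}$. Assume $G$ is $\alpha$-anchored ($0<\alpha\le1$) with anchor sets $\mathcal{X}^t_\perp\subseteq\mathcal{X}^t$: the marginal probability that $x^t\in\mathcal{X}^t_\perp$ is at least $\alpha$ for each $t$, and $\mu(x)=\mu(x|_{\overline{F}_x})\prod_{t\in F_x}\mu(x^t)$ for all $x$, where $F_x=\{t:x^t\in\mathcal{X}^t_\perp\}$, $\overline F_x=[k]\setminus F_x$, and $\mu(x|_S)$, $\mu(x^t)$ are marginals. Fix $n$, integers $1\le m<n$, $C=\{m+1,\dots,n\}$,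 and a deterministic strategy for $G^n$, i.e. functions $f^t:(\mathcal{X}^t)^n\to(\mathcal{A}^t)^n$. Let $X=(X_1,\dots,X_n)$, $X_i=(X_i^1,\dots,X_i^k)$, be distributed as $\mu^{\otimes n}$, let $(A_1^t,\dots,A_n^t)=f^t(X_1^t,\dots,X_n^t)$, $A_i=(A_i^1,\dots,A_i^k)$, and $Z=(A_j)_{j\in C}$. Let $W$ be the event that $V(X_j,A_j)=1$ for all $j\in C$, with $\Pr(W)>0$. For each $i,t$ let $Y_i^t=X_i^t$ if $X_i^t\notin\mathcal{X}^t_\perp$ and $Y_i^t=\perp$ otherwise; $Y_i=(Y_i^1,\dots,Y_i^k)$; for $S\subseteq[k]$, $Y_i^S=(Y_i^s)_{s\in S}$, $\overline S=[k]\setminus S$, $\perp^S$ is the all-$\perp$ tuple indexed by $S$, and $Y_i^{-t}=Y_i^{[k]\setminus\{t\}}$. For $i\in[m]$ let $D_i$ be a uniformly random subset of $[k]$ of size $k-1$, independent of each other and of $X$; $M_i=Y_i^{D_i}$, $\Omega_i=(D_i,M_i)$; for $j\in C$, $\Omega_j=X_j$. $\Omega_{-i}$ is $(\Omega_1,\dots,\Omega_n)$ with $\Omega_i$ omitted. Notation: for random variables $R\subseteq$ components of $Y_i$, $\mathsf{P}_{Y_i}\mathsf{P}_{\Omega_{-i}Z|W,Y_i^{S}=\perp^S,Y_i^{T}}$ denotes the distribution $(y,\omega,z)\mapsto\mathsf{P}_{Y_i}(y)\,\mathsf{P}_{\Omega_{-i}Z|W,Y_i^S=\perp^S,Y_i^{T}=y^{T}}(\omega,z)$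 (and similarly with no fixed part); $\|\cdot\|$ is total variation distance. *)

(* Defs.v *)
From mathcomp Require Import all_boot all_order all_algebra.
Unset Printing Implicit Defensive.
Import Order.TTheory GRing.Theory Num.Theory.
Local Open Scope ring_scope.

(* Rounds are indexed by 'I_n (round j is
   the paper's round j+1); the paper's [m] = rounds j < m, C = rounds j >= m. *)

Section Game.
Context {R : realFieldType} {k : nat} (Xt At : 'I_k -> finType).

Definition Xq : finType := {dffun forall t : 'I_k, Xt t}.
Definition Aq : finType := {dffun forall t : 'I_k, At t}.
(* values of Y_i : coordinate t is None (= bottom) or Some x^t *)
Definition Yq : finType := {dffun forall t : 'I_k, option (Xt t)}.

Definition is_distr (mu : Xq -> R) : Prop :=
  (forall x, 0 <= mu x) /\ \sum_(x : Xq) mu x = 1.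

Definition marg_on (mu : Xq -> R) (T : {set 'I_k}) (x : Xq) : R :=
  \sum_(x' : Xq | [forall s in T, x' s == x s]) mu x'.

Definition marg1 (mu : Xq -> R) (t : 'I_k) (a : Xt t) : R :=
  \sum_(x' : Xq | x' t == a) mu x'.

Definition anchor_players (anc : forall t, {set Xt t}) (x : Xq) : {set 'I_k} :=
  [set t | x t \in anc t].

Definition anchored (mu : Xq -> R) (anc : forall t, {set Xt t}) (alpha : R) : Prop :=
  [/\ 0 < alpha <= 1,
      (forall t, alpha <= \sum_(x : Xq | x t \in anc t) mu x) &
      (forall x, mu x = marg_on mu (~: anchor_players anc x) x *
                        \prod_(t in anchor_players anc x) marg1 mu t (x t))].

Definition tvd (T : finType) (P Q : T -> R) : R :=
  2^-1 * \sum_(p : T) `|P p - Q p|.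

Section Repetition.
Context (n m : nat) (mu : Xq -> R) (anc : forall t, {set Xt t})
        (V : Xq -> Aq -> bool)
        (f : forall t : 'I_k, {ffun 'I_n -> Xt t} -> {ffun 'I_n -> At t}).

(* sample space: questions of all n rounds, and the sets D_i for i in [m] *)
Definition Omega : finType :=
  ({ffun 'I_n -> Xq} * {ffun 'I_m -> {set 'I_k}})%type.

Definition Dweight (D : {set 'I_k}) : R :=
  if #|D| == k.-1 then (#|[set D' : {set 'I_k} | #|D'| == k.-1]|%:R)^-1 else 0.

Definition weight (w : Omega) : R :=
  (\prod_(j : 'I_n) mu (w.1 j)) * \prod_(i : 'I_m) Dweight (w.2 i).

Definition Pr (E : pred Omega) : R := \sum_(w : Omega | E w) weight w.

Definition qs (w : Omega) (t : 'I_k) : {ffun 'I_n -> Xt t} :=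
  [ffun j => w.1 j t].

Definition ans (w : Omega) (j : 'I_n) : Aq :=
  finfun (fun t : 'I_k => f t (qs w t) j).

Definition Yv (w : Omega) (j : 'I_n) : Yq :=
  finfun (fun t : 'I_k => if w.1 j t \in anc t then None else Some (w.1 j t)).

(* D_j (only meaningful for j < m) *)
Definition Dv (w : Omega) (j : 'I_n) : {set 'I_k} :=
  oapp (fun j' : 'I_m => w.2 j') set0 (insub (val j)).

(* value of Omega_j : inl (D_j, M_j) for j in [m] (M_j = Y_j^{D_j}, encoded
   as Some (Y_j^s) for s in D_j, None otherwise), inr X_j for j in C *)
Definition OmVal : finType :=
  ({set 'I_k} * {dffun forall t : 'I_k, option (option (Xt t))} + Xq)%type.

Definition Om (w : Omega) (j : 'I_n) : OmVal :=
  if (j < m)%N then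
    inl (Dv w j, finfun (fun t : 'I_k =>
                   if t \in Dv w j then Some (Yv w j t) else None))
  else inr (w.1 j).

Definition Om_dummy : OmVal := inl (set0, finfun (fun t : 'I_k => None)).

Definition OZVal : finType :=
  ({ffun 'I_n -> OmVal} * {ffun 'I_n -> option Aq})%type.

Definition OZ (i : 'I_n) (w : Omega) : OZVal :=
  ([ffun j => if j == i then Om_dummy else Om w j],
   [ffun j : 'I_n => if (m <= j)%N then Some (ans w j) else None]).

Definition Wev (w : Omega) : bool :=
  [forall j : 'I_n, (m <= j)%N ==> V (w.1 j) (ans w j)].

Definition PY (i : 'I_n) (y : Yq) : R := Pr [pred w | Yv w i == y].

Definition condEv (i : 'I_n) (S T : {set 'I_k}) (y : Yq) (w : Omega) : bool :=
  [&& Wev w, [forall s in S, Yv w i s == None] &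
             [forall s in T, Yv w i s == y s]].

(* P_{Omega_{-i} Z | W, Y_i^S = bot^S, Y_i^T = y^T}(v)
   (conditioning on a null event yields 0, the MathComp convention x/0 = 0) *)
Definition Pcond (i : 'I_n) (S T : {set 'I_k}) (y : Yq) (v : OZVal) : R :=
  Pr [pred w | condEv i S T y w && (OZ i w == v)] / Pr (condEv i S T y).

Definition mixture (i : 'I_n) (S T : {set 'I_k}) (p : (Yq * OZVal)%type) : R :=
  PY i p.1 * Pcond i S T p.1 p.2.

End Repetition.
End Game.

Arguments is_distr {R k Xt} mu.
Arguments anchored {R k Xt} mu anc alpha.
Arguments tvd {R T} P Q.
Arguments Pr {R k Xt n} m mu E.
Arguments Wev {k Xt At n} m V f w.
Arguments mixture {R k Xt At n} m mu anc V f i S T p.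

(* Main.v *)
Require Import Defs.
From mathcomp Require Import all_boot all_order all_algebra ring lra.
Import Order.TTheory GRing.Theory Num.Theory.
Local Open Scope ring_scope.


Section Upd.
Context {k : nat} (Xt : 'I_k -> finType).

Definition upd (x : Xq Xt) (s : 'I_k) (c : Xt s) : Xq Xt :=
  finfun (dfwith (x : forall t, Xt t) c).

Lemma upd_in x s c : upd x s c s = c.
Proof. by rewrite /upd ffunE dfwith_in. Qed.

Lemma upd_out x s c t : t != s -> upd x s c t = x t.
Proof. by move=> ne; rewrite /upd ffunE dfwith_out // eq_sym. Qed.

Lemma upd_upd x s a b : upd (upd x s a) s b = upd x s b.
Proof.
apply/ffunP => t; case: (eqVneq t s) => [->|ne]; first by rewrite !upd_in.
by rewrite !upd_out.
Qed.

Lemma upd_id x s : upd x s (x s) = x.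
Proof.
apply/ffunP => t; case: (eqVneq t s) => [->|ne]; first by rewrite !upd_in.
by rewrite !upd_out.
Qed.

Definition agree (T : {set 'I_k}) (g x : Xq Xt) := [forall t in T, x t == g t].

Lemma agreeP (T : {set 'I_k}) (g x : Xq Xt) : reflect (forall t, t \in T -> x t = g t) (agree T g x).
Proof.
apply: (iffP forall_inP) => H t tT; first by apply/eqP; apply: H.
by apply/eqP; apply: H.
Qed.

End Upd.
Arguments upd {k Xt} x s c.
Arguments agree {k Xt} T g x.


Section Fiber.
Context {R : realFieldType} {k : nat} (Xt : 'I_k -> finType).

Lemma fiber_sum (F : Xq Xt -> R) s (c c0 : Xt s) :
  \sum_(x : Xq Xt | x s == c) F x = \sum_(x : Xq Xt | x s == c0) F (upd x s c).
Proof.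
pose sw (d : Xt s) := if d == c0 then c else if d == c then c0 else d.
have swK : involutive sw.
  move=> d; rewrite /sw.
  case: (eqVneq d c0) => [->|ne0].
    by case: (eqVneq c c0) => [->|ne]; rewrite ?eqxx // (negPf ne) eqxx.
  case: (eqVneq d c) => [->|ne1]; first by rewrite eqxx.
  by rewrite (negPf ne0) (negPf ne1).
have swc : forall d, (sw d == c) = (d == c0).
  move=> d; rewrite /sw.
  case: (eqVneq d c0) => [e|ne0]; first by subst d; rewrite !eqxx.
  case: (eqVneq d c) => [e|ne1]; first by subst d; rewrite eq_sym (negPf ne0).
  by rewrite (negPf ne1).
pose sig (x : Xq Xt) := upd x s (sw (x s)).
have sigK : involutive sig.
  by move=> x; rewrite /sig upd_upd upd_in swK upd_id.
rewrite (reindex_inj (can_inj sigK)) /=.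
apply: eq_big => x.
  rewrite /sig upd_in; apply: swc.
move=> H; have H' : sw (x s) == c by move: H; rewrite /sig upd_in.
by rewrite /sig (eqP H').
Qed.

Lemma split_sum (F : Xq Xt -> R) s :
  \sum_x F x = \sum_(c : Xt s) \sum_(x : Xq Xt | x s == c) F x.
Proof. by rewrite (partition_big (fun x : Xq Xt => x s) predT). Qed.

End Fiber.
Arguments fiber_sum {R k Xt} F s c c0.
Arguments split_sum {R k Xt} F s.


Lemma andb_eqr (T : eqType) (P : pred T) (a b : T) : P b -> (P a && (a == b)) = (a == b).
Proof. by move=> Pb; case: (a =P b) => [->|]; rewrite ?andbT ?andbF ?Pb. Qed.

Section Prod.
Context {R : realFieldType} {k : nat} (Xt : 'I_k -> finType).

Lemma agree_eq (T : {set 'I_k}) (g g' x : Xq Xt) :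
  (forall t, t \in T -> g t = g' t) -> agree T g x = agree T g' x.
Proof.
move=> H; apply/agreeP/agreeP => H' t tT; first by rewrite H' // H.
by rewrite H' // H.
Qed.

Lemma agree_upd (A : {set 'I_k}) a (c : Xt a) (g x : Xq Xt) : a \in A ->
  agree (~: (A :\ a)) (upd g a c) x = agree (~: A) g x && (x a == c).
Proof.
move=> aA; apply/agreeP/andP => [H | [/agreeP H /eqP xa] t].
  split.
    apply/agreeP => t; rewrite inE => tA.
    have ta : t != a by apply: contraNneq tA => ->.
    by rewrite H ?upd_out // !inE ta.
  by apply/eqP; rewrite H ?upd_in // !inE eqxx.
rewrite !inE negb_and negbK => /orP [/eqP e | tA].
  by subst t; rewrite upd_in.
have ta : t != a by apply: contraNneq tA => ->.
by rewrite upd_out // H // inE.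
Qed.

Lemma agreeT (g x : Xq Xt) : agree (~: set0) g x = (x == g).
Proof.
apply/agreeP/eqP => [H | ->] //; apply/ffunP => t; apply: H; by rewrite !inE.
Qed.

Lemma prod_sum (A : {set 'I_k}) (g : Xq Xt) (h : forall t, Xt t -> R) :
  \sum_(x : Xq Xt | agree (~: A) g x) \prod_(t in A) h t (x t)
  = \prod_(t in A) \sum_(c : Xt t) h t c.
Proof.
move: {2}#|A| (erefl #|A|) => n; elim: n A g => [|n IH] A g cA.
  have -> : A = set0 by apply/eqP; rewrite -cards_eq0 cA.
  rewrite big_set0 (eq_bigl (fun x => x == g)); last by move=> x; rewrite agreeT.
  by rewrite big_pred1_eq big_set0.
have [a aA] : exists a, a \in A.
  by apply/set0Pn; rewrite -cards_eq0 cA.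
have cA' : #|A :\ a| = n by move: cA; rewrite (cardsD1 a A) aA add1n => -[].
rewrite (bigD1 a aA) /=.
rewrite (eq_bigl (fun t => t \in A :\ a)); last by move=> t; rewrite in_setD1 andbC.
rewrite (partition_big (fun x : Xq Xt => x a) predT) //=.
rewrite big_distrl /=; apply: eq_bigr => c _.
rewrite -(IH (A :\ a) (upd g a c) cA') big_distrr /=.
apply: eq_big => [x|x /andP [_ /eqP xa]].
  by rewrite agree_upd.
rewrite (bigD1 a aA) /= xa; congr (_ * _); apply: eq_bigl => t.
by rewrite in_setD1 andbC.
Qed.

Lemma agree_upd_out (B : {set 'I_k}) s (d : Xt s) (g x : Xq Xt) : s \notin B ->
  agree B g (upd x s d) = agree B g x.
Proof.
move=> sB; apply/agreeP/agreeP => H t tB.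
  have ts : t != s by apply: contraNneq sB => <-.
  by rewrite -H // upd_out.
have ts : t != s by apply: contraNneq sB => <-.
by rewrite upd_out // H.
Qed.

End Prod.
Arguments agree_eq {k Xt} T g g' x.
Arguments agree_upd {k Xt} A a c g x.
Arguments agreeT {k Xt} g x.
Arguments prod_sum {R k Xt} A g h.
Arguments agree_upd_out {k Xt} B s d g x.


Section One.
Context {R : realFieldType} {k : nat} (Xt : 'I_k -> finType)
  (mu : Xq Xt -> R) (anc : forall t, {set Xt t}).
Hypothesis mu_ge0 : forall x, 0 <= mu x.
Hypothesis mu_sum : \sum_x mu x = 1.
Hypothesis hmu : forall x, mu x = marg_on Xt mu (~: anchor_players Xt anc x) x *
   \prod_(t in anchor_players Xt anc x) marg1 Xt mu t (x t).

Local Notation Fp := (anchor_players Xt anc).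
Local Notation M := (marg_on Xt mu).
Local Notation m1 := (marg1 Xt mu).

Definition al s := \sum_(x : Xq Xt | x s \in anc s) mu x.

Lemma m1_ge0 t c : 0 <= m1 t c.
Proof. by apply: sumr_ge0 => x _. Qed.

Lemma M_ge0 T (x : Xq Xt) : 0 <= M T x.
Proof. by apply: sumr_ge0 => y _. Qed.

Lemma al_marg s : al s = \sum_(c | c \in anc s) m1 s c.
Proof.
rewrite /al (partition_big (fun x : Xq Xt => x s) (fun c => c \in anc s)) //=.
apply: eq_bigr => c cA; apply: eq_bigl => x; exact: andb_eqr.
Qed.

Lemma al_ge0 s : 0 <= al s.
Proof. by apply: sumr_ge0. Qed.

Lemma al_le1 s : al s <= 1.
Proof.
rewrite -mu_sum /al [X in _ <= X](bigID (fun x : Xq Xt => x s \in anc s)) /=.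
by rewrite lerDl; apply: sumr_ge0.
Qed.

Lemma sum_mkcond (P Q : pred (Xq Xt)) (F : Xq Xt -> R) :
  \sum_(x | P x && Q x) F x = \sum_(x | P x) F x * (Q x)%:R.
Proof.
rewrite big_mkcondr; apply: eq_bigr => x _.
by case: (Q x); rewrite ?mulr1 ?mulr0.
Qed.

Section Fix.
Variables (s : 'I_k) (c0 : Xt s).
Hypothesis hc0 : c0 \in anc s.

Definition xs0 (x : Xq Xt) := upd x s c0.
Definition Pi (x : Xq Xt) := \prod_(t in Fp (xs0 x) :\ s) m1 t (xs0 x t).
Definition Q (x : Xq Xt) := M (~: Fp (xs0 x)) (xs0 x) * Pi x.
Definition Lb (B : {set 'I_k}) (g : Xq Xt) := \sum_(x : Xq Xt | (x s \in anc s) && agree B g x) mu x.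
Definition Db (B : {set 'I_k}) (g : Xq Xt) := al s * M B g - Lb B g.

Lemma Q_upd (x : Xq Xt) d : Q (upd x s d) = Q x.
Proof. by rewrite /Q /Pi /xs0 upd_upd. Qed.

Lemma Pi_upd (x : Xq Xt) d : Pi (upd x s d) = Pi x.
Proof. by rewrite /Pi /xs0 upd_upd. Qed.

Lemma s_in_F0 (x : Xq Xt) : s \in Fp (xs0 x).
Proof. by rewrite inE /xs0 upd_in. Qed.

Lemma F1 (x : Xq Xt) : x s \in anc s -> mu x = m1 s (x s) * Q x.
Proof.
move=> xa; have eF : Fp x = Fp (xs0 x).
  apply/setP => t; rewrite !inE.
  case: (eqVneq t s) => [e|ne]; first by subst t; rewrite /xs0 upd_in xa hc0.
  by rewrite /xs0 upd_out.
rewrite hmu /Q /Pi -eF.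
have -> : M (~: Fp x) (xs0 x) = M (~: Fp x) x.
  apply: eq_bigl => y; apply: agree_eq => t; rewrite !inE => tF.
  have ts : t != s by apply: contraNneq tF => e; subst t.
  by rewrite /xs0 upd_out.
have sF : s \in Fp x by rewrite inE.
rewrite (bigD1 s sF) /= mulrCA; congr (_ * (_ * _)).
apply: eq_big => [t|t]; first by rewrite in_setD1 andbC.
by move=> /andP [_ ts]; rewrite /xs0 upd_out.
Qed.

Lemma F2 (x : Xq Xt) : \sum_(c | c \notin anc s) mu (upd x s c)
  = Pi x * (M (~: Fp (xs0 x)) (xs0 x) - Lb (~: Fp (xs0 x)) (xs0 x)).
Proof.
set x' := xs0 x; set A := Fp x'.
have sA : s \in A by exact: s_in_F0.
have step : forall c, c \notin anc s ->
   mu (upd x s c) = Pi x * \sum_(z | agree (~: A) x' z && (z s == c)) mu z.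
  move=> c cn; set y := upd x s c.
  have eF : Fp y = A :\ s.
    apply/setP => t; rewrite !inE.
    case: (eqVneq t s) => [e|ne]; first by subst t; rewrite /y upd_in (negPf cn).
    by rewrite /y /x' /xs0 !upd_out.
  rewrite hmu eF mulrC; congr (_ * _).
    apply: eq_bigr => t; rewrite in_setD1 => /andP [ts _].
    by rewrite /y /x' /xs0 !upd_out.
  apply: eq_bigl => z; rewrite -agree_upd //.
  apply: agree_eq => t _; by rewrite /x' /xs0 upd_upd.
rewrite (eq_bigr _ step) -big_distrr /=; congr (_ * _).
have -> : Lb (~: A) x' = \sum_(z | agree (~: A) x' z && (z s \in anc s)) mu z.
  by apply: eq_bigl => z; rewrite andbC.
rewrite /marg_on (bigID (fun z : Xq Xt => z s \in anc s)) /=.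
have E : forall a b c : R, a = c -> (a + b) - c = b by move=> a b c ->; rewrite addrC addKr.
rewrite E; last by apply: eq_bigl.
rewrite (partition_big (fun z : Xq Xt => z s) (fun c => c \notin anc s)) /=; last first.
  by move=> z /andP [].
apply: eq_bigr => c cn; apply: eq_bigl => z.
case: (z s =P c) => [e|]; last by rewrite !andbF.
by rewrite e cn !andbT.
Qed.

Lemma F3 (x : Xq Xt) : \sum_c mu (upd x s c) = Q x + Pi x * Db (~: Fp (xs0 x)) (xs0 x).
Proof.
rewrite (bigID (fun c => c \in anc s)) /= F2.
have -> : \sum_(c | c \in anc s) mu (upd x s c) = al s * Q x.
  rewrite al_marg big_distrl /=; apply: eq_bigr => c cA.
  by rewrite F1 upd_in ?Q_upd.
rewrite /Db /Q; ring.
Qed.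

Lemma Dec1 (h : Xq Xt -> R) : (forall x d, h (upd x s d) = h x) ->
  \sum_x mu x * h x = \sum_(x : Xq Xt | x s == c0) (\sum_c mu (upd x s c)) * h x.
Proof.
move=> hI; rewrite (split_sum _ s).
rewrite (eq_bigr (fun c => \sum_(x : Xq Xt | x s == c0) mu (upd x s c) * h x)); last first.
  move=> c _; rewrite (fiber_sum _ s c c0); apply: eq_bigr => x _; by rewrite hI.
rewrite exchange_big /=; apply: eq_bigr => x _; by rewrite big_distrl.
Qed.

Lemma Dec2 (h : Xq Xt -> R) : (forall x d, h (upd x s d) = h x) ->
  \sum_(x : Xq Xt | x s \in anc s) mu x * h x = al s * \sum_(x : Xq Xt | x s == c0) Q x * h x.
Proof.
move=> hI.
rewrite (partition_big (fun x : Xq Xt => x s) (fun c => c \in anc s)) //=.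
rewrite al_marg big_distrl /=; apply: eq_bigr => c cA.
rewrite (eq_bigl (fun x : Xq Xt => x s == c)); last by move=> x; exact: andb_eqr.
rewrite (fiber_sum _ s c c0) big_distrr /=; apply: eq_bigr => x _.
by rewrite F1 ?upd_in // Q_upd hI mulrA.
Qed.

Lemma Db_agree (B : {set 'I_k}) (g x : Xq Xt) : agree B g x -> Db B x = Db B g.
Proof.
move=> /agreeP H; rewrite /Db /Lb /marg_on; congr (_ * _ - _).
  by apply: eq_bigl => z; apply: (agree_eq B x g z) => t tB; rewrite H.
apply: eq_bigl => z; congr (_ && _).
by apply: (agree_eq B x g z) => t tB; rewrite H.
Qed.

Lemma Cbound (B : {set 'I_k}) (g : Xq Xt) : s \notin B -> (forall t, t \in B -> g t \notin anc t) ->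
  \sum_(x : Xq Xt | x s == c0) Pi x * (agree B g x)%:R * (~: Fp x == B)%:R <= 1.
Proof.
move=> sB gB.
set A := ~: B :\ s; set g' := upd g s c0.
pose hh t (d : Xt t) := if d \in anc t then m1 t d else 0.
have hh_ge0 : forall t d, 0 <= hh t d by move=> t d; rewrite /hh; case: ifP => // _; apply: m1_ge0.
apply: (@le_trans _ _ (\sum_(x | agree (~: A) g' x) \prod_(t in A) hh t (x t))).
  rewrite big_mkcond [X in _ <= X]big_mkcond; apply: ler_sum => x _.
  have rge0 : 0 <= (if agree (~: A) g' x then \prod_(t in A) hh t (x t) else 0).
    by case: ifP => // _; apply: prodr_ge0 => t _.
  case: ifP => [/eqP xs|_]; last by [].
  case hag: (agree B g x); last by rewrite mulr0 mul0r.
  case: (eqVneq (~: Fp x) B) => [e|]; last by rewrite mulr0.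
  have xsx : xs0 x = x by rewrite /xs0 -xs upd_id.
  have FB : Fp x = ~: B by rewrite -e setCK.
  have -> : agree (~: A) g' x.
    apply/agreeP => t; rewrite !inE negb_and !negbK => /orP [/eqP ts | tB].
      by subst t; rewrite /g' upd_in.
    have ts : t != s by apply: contraNneq sB => <-.
    by rewrite /g' upd_out //; move/agreeP: hag => ->.
  rewrite le_eqVlt; apply/orP; left; apply/eqP; rewrite /= !mulr1 /Pi xsx FB; apply: eq_bigr => t tA.
  have : t \in Fp x by rewrite FB; move: tA; rewrite in_setD1 => /andP [].
  by rewrite inE /hh => ->.
rewrite prod_sum; apply: prodr_ile1 => t _; apply/andP; split.
  by apply: sumr_ge0 => d _.
rewrite (_ : \sum_c hh t c = al t); first exact: al_le1.
by rewrite al_marg [in RHS]big_mkcond.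
Qed.

Hypothesis al_lt1 : al s < 1.

Lemma Kl n (B : {set 'I_k}) (g : Xq Xt) : (#|~: B| <= n)%N -> s \notin B ->
  (forall t, t \in B -> g t \notin anc t) -> Db B g = 0.
Proof.
elim: n B g => [|n IH] B g cB sB gB.
  move: cB; rewrite leqn0 cards_eq0 => /eqP e.
  by move: sB; rewrite -in_setC e inE.
set D := Db B g.
pose h (x : Xq Xt) := (agree B g x)%:R : R.
have hI : forall x d, h (upd x s d) = h x by move=> x d; rewrite /h agree_upd_out.
have eM : M B g = \sum_x mu x * h x.
  rewrite /marg_on big_mkcond /=; apply: eq_bigr => x _; rewrite /h /agree.
  by case: ifP; rewrite ?mulr1 ?mulr0.
have eL : Lb B g = \sum_(x : Xq Xt | x s \in anc s) mu x * h x by rewrite /Lb sum_mkcond.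
have eD : D = al s * \sum_(x : Xq Xt | x s == c0) Pi x * Db (~: Fp (xs0 x)) (xs0 x) * h x.
  rewrite /D /Db eM eL (Dec1 _ hI) (Dec2 _ hI) -mulrBr; congr (_ * _).
  rewrite -sumrB; apply: eq_bigr => x _; rewrite F3 /Db; ring.
set c := \sum_(x : Xq Xt | x s == c0) Pi x * h x * (~: Fp x == B)%:R.
have eD2 : \sum_(x : Xq Xt | x s == c0) Pi x * Db (~: Fp (xs0 x)) (xs0 x) * h x = D * c.
  rewrite /c big_distrr /=; apply: eq_bigr => x /eqP xs.
  have xsx : xs0 x = x by rewrite /xs0 -xs upd_id.
  rewrite xsx /h; case hag: (agree B g x); last by rewrite !mulr0 mul0r mulr0.
  case: (eqVneq (~: Fp x) B) => [e|ne].
    by rewrite e (Db_agree _ _ _ hag) /D /=; ring.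
  have sF : s \in Fp x by rewrite inE xs.
  rewrite (IH (~: Fp x) x); first by rewrite /=; ring.
  - rewrite setCK -ltnS; apply: (leq_trans _ cB); apply: proper_card.
    rewrite properEneq; apply/andP; split.
      by apply: contra ne => /eqP ->; rewrite setCK.
    apply/subsetP => t tF; rewrite inE; apply: contraT; rewrite negbK => tB.
    by move: (gB t tB) tF; move/agreeP: hag => <- //; rewrite inE => /negPf ->.
  - by rewrite inE negbK.
  - by move=> t; rewrite !inE.
have c_ge0 : 0 <= c.
  apply: sumr_ge0 => x _; apply: mulr_ge0; [apply: mulr_ge0|]; rewrite ?ler0n //.
  by apply: prodr_ge0 => t _; apply: m1_ge0.
have c_le1 : c <= 1.
  rewrite /c (eq_bigr (fun x => Pi x * (agree B g x)%:R * (~: Fp x == B)%:R)) //.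
  exact: Cbound.
have hc : al s * c < 1.
  apply: (le_lt_trans _ al_lt1); rewrite ler_piMr //; exact: al_ge0.
have : D * (1 - al s * c) = 0 by rewrite mulrBr mulr1 {1}eD eD2 mulrCA mulrA subrr.
move/eqP; rewrite mulf_eq0 => /orP [/eqP // | ].
by rewrite subr_eq0 => /eqP e; move: hc; rewrite -e ltxx.
Qed.

End Fix.
Lemma Ind s (E : pred (Xq Xt)) : (forall x d, E (upd x s d) = E x) ->
  \sum_(x : Xq Xt | (x s \in anc s) && E x) mu x = al s * \sum_(x | E x) mu x.
Proof.
move=> EI.
have [al1|alneq] := eqVneq (al s) 1.
  have z : forall x : Xq Xt, x s \notin anc s -> mu x = 0.
    apply: psumr_eq0P; first by move=> x _.
    have := mu_sum; rewrite (bigID (fun x : Xq Xt => x s \in anc s)) /= -/(al s) al1.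
    by move=> H; lra.
  rewrite al1 mul1r [RHS](bigID (fun x : Xq Xt => x s \in anc s)) /=.
  rewrite [X in _ = _ + X]big1 ?addr0; last by move=> x /andP [_ /z].
  by apply: eq_bigl => x; rewrite andbC.
have al_lt1 : al s < 1 by rewrite lt_neqAle alneq al_le1.
case: (pickP (fun c : Xt s => c \in anc s)) => [c0 hc0 | none]; last first.
  rewrite big_pred0; last by move=> x; rewrite none.
  by rewrite /al big_pred0 ?mul0r // => x; rewrite none.
pose e (x : Xq Xt) := (E x)%:R : R.
have eI : forall x d, e (upd x s d) = e x by move=> x d; rewrite /e EI.
rewrite sum_mkcond (Dec2 s c0 hc0 _ eI).
have -> : \sum_(x | E x) mu x = \sum_x mu x * e x.
  rewrite big_mkcond; apply: eq_bigr => x _; rewrite /e.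
  by case: (E x); rewrite ?mulr1 ?mulr0.
rewrite (Dec1 s c0 _ eI); congr (_ * _); apply: eq_bigr => x _.
rewrite (F3 s c0 hc0) (Kl s c0 hc0 al_lt1 #|~: ~: Fp (xs0 s c0 x)|) ?mulr0 ?addr0 //.
- by rewrite inE negbK s_in_F0.
- by move=> t; rewrite !inE.
Qed.

Definition Yf (x : Xq Xt) : Yq Xt :=
  finfun (fun t => if x t \in anc t then None else Some (x t)).
Definition Ycl (S : {set 'I_k}) (y : Yq Xt) : Yq Xt :=
  finfun (fun t => if t \in S then None else y t).

Lemma ratio_anch (alpha : R) : 0 <= alpha -> (forall s, alpha <= al s) ->
  forall (S : {set 'I_k}) (a : Yq Xt),
  alpha ^+ #|S| * \sum_(x | Ycl S (Yf x) == a) mu x <= \sum_(x | Yf x == a) mu x.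
Proof.
move=> ha hal S a.
have rge0 : 0 <= \sum_(x | Yf x == a) mu x by apply: sumr_ge0.
case: (boolP [forall s in S, a s == None]) => [/forall_inP aS | /forall_inPn [s sS asn]]; last first.
  rewrite big_pred0 ?mulr0 // => x; apply/negbTE; apply: contra asn => /eqP <-.
  by rewrite ffunE sS.
move: {2}#|S| (erefl #|S|) => n; elim: n S aS => [|n IH] S aS cS.
  have -> : S = set0 by apply/eqP; rewrite -cards_eq0 cS.
  rewrite cards0 expr0 mul1r le_eqVlt; apply/orP; left; apply/eqP.
  apply: eq_bigl => x; congr (_ == _); apply/ffunP => t; by rewrite ffunE inE.
have [s sS] : exists s, s \in S by apply/set0Pn; rewrite -cards_eq0 cS.
have cS' : #|S :\ s| = n by move: cS; rewrite (cardsD1 s S) sS add1n => -[].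
have aS' : forall t, t \in S :\ s -> a t == None.
  by move=> t; rewrite in_setD1 => /andP [_ /aS].
have as0 : a s = None by apply/eqP; apply: aS.
have EE : forall x, (Ycl (S :\ s) (Yf x) == a) = (x s \in anc s) && (Ycl S (Yf x) == a).
  move=> x; apply/eqP/andP => [H | [xa /eqP H]].
    have Hs := f_equal (fun y : Yq Xt => y s) H; move: Hs => /=.
    rewrite /Ycl /Yf !ffunE in_setD1 eqxx /= as0.
    case: ifP => // xa _; split => //; apply/eqP/ffunP => t; rewrite !ffunE.
    case: ifP => tS; first by apply/esym/eqP; apply: aS.
    have := f_equal (fun y : Yq Xt => y t) H; rewrite /= !ffunE in_setD1 tS andbF.
    by [].
  apply/ffunP => t; rewrite !ffunE in_setD1.
  case: (eqVneq t s) => [e|ts] /=.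
    by subst t; rewrite xa as0.
  case: ifP => tS; first by apply/esym/eqP; apply: aS.
  by have := f_equal (fun y : Yq Xt => y t) H; rewrite /= !ffunE tS.
have EI : forall x d, (Ycl S (Yf (upd x s d)) == a) = (Ycl S (Yf x) == a).
  move=> x d; congr (_ == _); apply/ffunP => t; rewrite !ffunE.
  case: ifP => // tS; have ts : t != s by apply: contraFneq tS => ->.
  by rewrite dfwith_out // eq_sym.
have := IH (S :\ s) aS' cS'; rewrite (eq_bigl _ _ EE) (Ind s _ EI) => H.
rewrite cS' in H; apply: le_trans H; rewrite cS exprS -mulrA mulrCA.
apply: ler_wpM2l; first by apply: exprn_ge0.
apply: ler_wpM2r; [by apply: sumr_ge0 | exact: hal].
Qed.

End One.

Section Multi.
Context {R : realFieldType} {k : nat} (Xt At : 'I_k -> finType)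
  (n m : nat) (mu : Xq Xt -> R) (anc : forall t, {set Xt t})
  (V : Xq Xt -> Aq At -> bool)
  (f : forall t : 'I_k, {ffun 'I_n -> Xt t} -> {ffun 'I_n -> At t}).
Hypothesis mu_ge0 : forall x, 0 <= mu x.
Hypothesis mu_sum : \sum_x mu x = 1.

Definition Kc : R := \sum_(w2 : {ffun 'I_m -> {set 'I_k}}) \prod_(l : 'I_m) Dweight (w2 l).

Lemma Dweight_ge0 (D : {set 'I_k}) : 0 <= Dweight D :> R.
Proof. by rewrite /Dweight; case: ifP => // _; rewrite invr_ge0 ler0n. Qed.

Lemma Kc_ge0 : 0 <= Kc.
Proof. by apply: sumr_ge0 => w2 _; apply: prodr_ge0 => l _; apply: Dweight_ge0. Qed.

Lemma weight_ge0 (w : Omega Xt n m) : 0 <= weight Xt n m mu w.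
Proof.
apply: mulr_ge0; apply: prodr_ge0 => j _; [exact: mu_ge0 | exact: Dweight_ge0].
Qed.

Lemma Pr_ge0 (E : pred (Omega Xt n m)) : 0 <= Pr m mu E.
Proof. by apply: sumr_ge0 => w _; apply: weight_ge0. Qed.

Lemma Pr_round (i : 'I_n) (E : pred (Xq Xt)) :
  Pr m mu (fun w => E (w.1 i)) = (\sum_(x | E x) mu x) * Kc.
Proof.
rewrite /Pr big_mkcond /=.
transitivity (\sum_(w1 : {ffun 'I_n -> Xq Xt}) \sum_(w2 : {ffun 'I_m -> {set 'I_k}})
   (if E (w1 i) then (\prod_(j : 'I_n) mu (w1 j)) * \prod_(l : 'I_m) Dweight (w2 l) else 0)).
  by rewrite pair_bigA.
rewrite (eq_bigr (fun w1 : {ffun 'I_n -> Xq Xt} =>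
   (if E (w1 i) then \prod_(j : 'I_n) mu (w1 j) else 0) * Kc)); last first.
  move=> w1 _; rewrite /Kc; case: (E (w1 i)); first by rewrite big_distrr.
  by rewrite mul0r big1.
rewrite -big_distrl /=; congr (_ * _).
pose F (j : 'I_n) (x : Xq Xt) := if j == i then (if E x then mu x else 0) else mu x.
transitivity (\sum_(w1 : {ffun 'I_n -> Xq Xt}) \prod_(j : 'I_n) F j (w1 j)).
  apply: eq_bigr => w1 _.
  rewrite (bigD1 i) //= [RHS](bigD1 i) //=.
  have -> : F i (w1 i) = (if E (w1 i) then mu (w1 i) else 0) by rewrite /F eqxx.
  rewrite (eq_bigr (fun j => F j (w1 j))); last by move=> j /negPf ji; rewrite /F ji.
  by case: (E (w1 i)); rewrite ?mul0r.
rewrite -bigA_distr_bigA (bigD1 i) //= [X in _ * X]big1 ?mulr1; last first.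
  move=> j /negPf ji; rewrite -mu_sum; apply: eq_bigr => x _; by rewrite /F ji.
by rewrite [RHS]big_mkcond; apply: eq_bigr => x _; rewrite /F eqxx.
Qed.

Lemma PYE (i : 'I_n) y : PY Xt n m mu anc i y = (\sum_(x | Yf Xt anc x == y) mu x) * Kc.
Proof. by rewrite -(Pr_round i (fun x => Yf Xt anc x == y)) /PY /Pr; apply: eq_bigl. Qed.

Lemma PY_ge0 (i : 'I_n) y : 0 <= PY Xt n m mu anc i y.
Proof. exact: Pr_ge0. Qed.

Hypothesis hmu : forall x, mu x = marg_on Xt mu (~: anchor_players Xt anc x) x *
   \prod_(t in anchor_players Xt anc x) marg1 Xt mu t (x t).

Lemma LS (alpha : R) (i : 'I_n) (phi : Yq Xt -> R) (S : {set 'I_k}) :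
  0 < alpha -> (forall s, alpha <= al Xt mu anc s) -> (forall y, 0 <= phi y) ->
  \sum_y PY Xt n m mu anc i y * phi (Ycl Xt S y)
  <= alpha ^- #|S| * \sum_y PY Xt n m mu anc i y * phi y.
Proof.
move=> a0 hal phi0.
rewrite (partition_big (Ycl Xt S) predT) //= big_distrr /=.
apply: ler_sum => a _.
rewrite (eq_bigr (fun y => PY Xt n m mu anc i y * phi a)); last by move=> y /eqP ->.
rewrite -big_distrl /= mulrA; apply: ler_wpM2r; first exact: phi0.
have -> : \sum_(y | Ycl Xt S y == a) PY Xt n m mu anc i y
    = Pr m mu (fun w => Ycl Xt S (Yf Xt anc (w.1 i)) == a).
  rewrite /Pr (partition_big (fun w : Omega Xt n m => Yf Xt anc (w.1 i))
                 (fun y => Ycl Xt S y == a)) //=.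
  apply: eq_bigr => y ya; rewrite /PY /Pr; apply: eq_bigl => w /=.
  by rewrite (andb_eqr _ (fun z => Ycl Xt S z == a)) //.
rewrite (Pr_round i (fun x => Ycl Xt S (Yf Xt anc x) == a)) PYE mulrA.
apply: ler_wpM2r; first exact: Kc_ge0.
have hr := ratio_anch Xt mu anc mu_ge0 mu_sum hmu alpha (ltW a0) hal S a.
have an0 : alpha ^+ #|S| != 0 by rewrite expf_neq0 // gt_eqF.
rewrite -[X in X <= _](mulKf an0); apply: ler_wpM2l => //.
by rewrite invr_ge0 exprn_ge0 // ltW.
Qed.

Lemma YclE (S : {set 'I_k}) (y : Yq Xt) s : Ycl Xt S y s = if s \in S then None else y s.
Proof. by rewrite ffunE. Qed.

Lemma condE (i : 'I_n) (S T : {set 'I_k}) y w :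
  (forall s, (s \in T) = (s \notin S)) ->
  condEv Xt At n m anc V f i S T y w = condEv Xt At n m anc V f i set0 setT (Ycl Xt S y) w.
Proof.
move=> hT; rewrite /condEv; congr (_ && _).
apply/idP/idP.
  move=> /andP [/forall_inP H1 /forall_inP H2]; apply/andP; split.
    by apply/forall_inP => s; rewrite inE.
  apply/forall_inP => s _; rewrite YclE; case: ifP => sS; first exact: H1.
  by apply: H2; rewrite hT sS.
move=> /andP [_ /forall_inP H]; apply/andP; split.
  by apply/forall_inP => s sS; have := H s (in_setT s); rewrite YclE sS.
apply/forall_inP => s sT; have := H s (in_setT s); rewrite YclE.
by move: sT; rewrite hT => /negPf ->.
Qed.

Lemma Pcond_ext (i : 'I_n) S T S' T' y y' :
  (forall w, condEv Xt At n m anc V f i S T y w = condEv Xt At n m anc V f i S' T' y' w) ->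
  forall v, Pcond Xt At n m mu anc V f i S T y v = Pcond Xt At n m mu anc V f i S' T' y' v.
Proof.
move=> H v; rewrite /Pcond; congr (_ / _); apply: eq_bigl => w /=; by rewrite H.
Qed.

End Multi.

Theorem lemma4p6 (R : realFieldType) (k : nat) (Xt At : 'I_k -> finType)
  (mu : Xq Xt -> R) (anc : forall t : 'I_k, {set Xt t}) (alpha : R)
  (V : Xq Xt -> Aq At -> bool) (n m : nat)
  (f : forall t : 'I_k, {ffun 'I_n -> Xt t} -> {ffun 'I_n -> At t}) :
  is_distr mu -> anchored mu anc alpha ->
  (1 <= m)%N -> (m < n)%N ->
  0 < Pr m mu (Wev m V f) ->
  forall (i : 'I_n) (S : {set 'I_k}) (t : 'I_k),
  (i < m)%N -> t \notin S ->
  tvd (mixture m mu anc V f i S (~: S))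
      (mixture m mu anc V f i (t |: S) (~: S :\ t))
  <= 2 * alpha ^- (#|S|.+1) *
     tvd (mixture m mu anc V f i set0 setT)
         (mixture m mu anc V f i set0 [set~ t]).
Proof.
move=> [mu0 mu1] [/andP [a0 a1] hal hmu] _ _ _ i S t _ tS.
have hal' : forall s, alpha <= al Xt mu anc s by exact: hal.
set P := PY Xt n m mu anc i.
set G := Pcond Xt At n m mu anc V f i set0 setT.
set H := Pcond Xt At n m mu anc V f i set0 [set~ t].
pose phi y := \sum_v `|G y v - H y v|.
have phi0 : forall y, 0 <= phi y by move=> y; apply: sumr_ge0 => v _.
have P0 : forall y, 0 <= P y by move=> y; apply: PY_ge0.
have e1 : forall y v, mixture m mu anc V f i S (~: S) (y, v) = P y * G (Ycl Xt S y) v.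
  move=> y v; rewrite /mixture /=; congr (_ * _); apply: Pcond_ext => w.
  by apply: condE => s; rewrite inE.
have e2 : forall y v, mixture m mu anc V f i (t |: S) (~: S :\ t) (y, v)
    = P y * G (Ycl Xt (t |: S) y) v.
  move=> y v; rewrite /mixture /=; congr (_ * _); apply: Pcond_ext => w.
  by apply: condE => s; rewrite !inE negb_or.
have eH : forall y v, H (Ycl Xt S y) v = H (Ycl Xt (t |: S) y) v.
  move=> y v; apply: Pcond_ext => w; rewrite /condEv; congr (_ && (_ && _)).
  apply/forall_inP/forall_inP => Hh s hs; have := Hh s hs;
    move: hs; rewrite !inE => st; rewrite !YclE in_setU1 (negPf st) //.
set X := \sum_y P y * phi y.
have X0 : 0 <= X by apply: sumr_ge0 => y _; apply: mulr_ge0.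
have eR : \sum_p `|mixture m mu anc V f i set0 setT p - mixture m mu anc V f i set0 [set~ t] p| = X.
  have -> : \sum_p `|mixture m mu anc V f i set0 setT p - mixture m mu anc V f i set0 [set~ t] p|
     = \sum_y \sum_v `|P y * G y v - P y * H y v|.
    by rewrite pair_bigA; apply: eq_bigr => -[y v].
  apply: eq_bigr => y _; rewrite /phi big_distrr /=; apply: eq_bigr => v _.
  by rewrite -mulrBr normrM ger0_norm.
have L1 : \sum_p `|mixture m mu anc V f i S (~: S) p - mixture m mu anc V f i (t |: S) (~: S :\ t) p|
    <= alpha ^- #|S| * X + alpha ^- (#|S|.+1) * X.
  have -> : \sum_p `|mixture m mu anc V f i S (~: S) p - mixture m mu anc V f i (t |: S) (~: S :\ t) p|
     = \sum_y \sum_v `|P y * G (Ycl Xt S y) v - P y * G (Ycl Xt (t |: S) y) v|.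
    by rewrite pair_bigA; apply: eq_bigr => -[y v] _; rewrite e1 e2.
  apply: (@le_trans _ _ (\sum_y (P y * phi (Ycl Xt S y) + P y * phi (Ycl Xt (t |: S) y)))).
    apply: ler_sum => y _; rewrite /phi -mulrDr -big_split big_distrr /=.
    apply: ler_sum => v _; rewrite -mulrBr normrM ger0_norm //.
    apply: ler_wpM2l => //.
    rewrite (_ : G (Ycl Xt S y) v - G (Ycl Xt (t |: S) y) v
       = (G (Ycl Xt S y) v - H (Ycl Xt S y) v) - (G (Ycl Xt (t |: S) y) v - H (Ycl Xt (t |: S) y) v)).
      exact: ler_normB.
    rewrite eH; ring.
  rewrite big_split /=; apply: lerD.
    exact: (LS Xt n m mu anc mu0 mu1 hmu alpha i phi S a0 hal' phi0).
  have := LS Xt n m mu anc mu0 mu1 hmu alpha i phi (t |: S) a0 hal' phi0.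
  by rewrite cardsU1 tS add1n.
have uv : alpha ^- #|S| <= alpha ^- (#|S|.+1).
  rewrite exprSr invfM -[X in X <= _]mulr1 ler_wpM2l //.
    by rewrite invr_ge0 exprn_ge0 // ltW.
  by rewrite invf_ge1.
have u0 : 0 <= alpha ^- #|S| by rewrite invr_ge0 exprn_ge0 // ltW.
rewrite /tvd eR.
set A := \sum_p _ in L1 *.
set u := alpha ^- #|S| in uv u0 L1 *.
set v := alpha ^- (#|S|.+1) in uv u0 L1 *.
have : (v - u) * X >= 0 by apply: mulr_ge0 => //; rewrite subr_ge0.
move: L1; clear; nra.
Qed.
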